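(* Every word-representable graph $G=(V,E)$ admits a border-free word representing it, i.e. a word $w$ representing $G$ that cannot be written as $w=uvu$ with $u$ non-empty.
   Context: A graph $G=(V,E)$ is word-representable if there is a word $w$ over the alphabet $V$, containing every letter of $V$, such that for all distinct $x,y\in V$, the letters $x$ and $y$ alternate in $w$ (i.e. deleting all letters other than $x,y$ from $w$ yields a word of the form $xyxy\cdots$ or $yxyx\cdots$, of even or odd length) if and only if $xy\in E$; such $w$ is said to represent $G$. A word $w$ is bordered if $w=uvu$ for some words $u,v$ with $u$ non-empty; otherwise it is border-free. *)

(* Defs.v *)
From mathcomp Require Import all_boot.
Set Implicit Arguments. Unset Strict Implicit. Unset Printing Implicit Defensive.

Definition simple_graph (V : finType) (e : rel V) : Prop :=
  symmetric e /\ irreflexive e.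

Definition alternate (V : eqType) (w : seq V) (x y : V) : bool :=
  sorted (fun a b : V => a != b) [seq z <- w | (z == x) || (z == y)].

Definition represents (V : finType) (e : rel V) (w : seq V) : Prop :=
  (forall v : V, v \in w) /\
  (forall x y : V, x != y -> (alternate w x y <-> e x y)).

Definition word_representable (V : finType) (e : rel V) : Prop :=
  exists w : seq V, represents e w.

Definition bordered (V : eqType) (w : seq V) : Prop :=
  exists u v : seq V, u <> [::] /\ w = u ++ v ++ u.

Definition border_free (V : eqType) (w : seq V) : Prop := ~ bordered w.

(* Main.v *)
Require Import Defs.
From mathcomp Require Import all_boot zify.
From Stdlib Require Import Classical.
Set Implicit Arguments. Unset Strict Implicit. Unset Printing Implicit Defensive.


Section S.
Variable V : eqType.
Local Notation neq := (fun a b : V => a != b).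

Lemma alt2 (t : seq V) (a b : V) : a != b ->
  all (fun z => (z == a) || (z == b)) t -> path neq a t ->
  count_mem a (a::t) = count_mem b (a::t) + odd (size (a::t)) /\
  last a t = (if odd (size (a::t)) then a else b).
Proof.
elim: t a b => [|c t IH] a b ab /=.
  by move=> _ _; rewrite eqxx (negbTE ab).
case/andP=> /orP[/eqP->|/eqP->] Hall /andP[Hac Hp]; first by rewrite eqxx in Hac.
have ba : b != a by rewrite eq_sym.
have Hall' : all (fun z => (z == b) || (z == a)) t.
  by apply: sub_all Hall => z; rewrite orbC.
have [IHc IHl] := IH b a ba Hall' Hp.
move: IHc IHl => /=; rewrite !eqxx (negbTE ab) (negbTE ba) !negbK /=.
case: (odd (size t)) => /= -> ->; split => //; rewrite ?addn0 ?addn1 //.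
Qed.

End S.

Section S.
Variable V : eqType.
Local Notation neq := (fun a b : V => a != b).
Definition in2 (x y : V) := fun z : V => (z == x) || (z == y).

Lemma in2C x y : in2 x y =1 in2 y x.
Proof. by move=> z; rewrite /in2 orbC. Qed.

Lemma cyc_ab a b t : a != b -> all (in2 a b) t ->
  count_mem a (a::t) = count_mem b (a::t) -> path neq a t -> last a t != a.
Proof.
move=> ab Ha Hc Hp; have [Hc' Hl] := alt2 ab Ha Hp.
move: Hc'; rewrite Hc; case: (odd _) Hl => /= Hl.
  by move=> H; lia.
by move=> _; rewrite Hl eq_sym.
Qed.

Lemma sorted_cycle x y s : x != y -> all (in2 x y) s ->
  count_mem x s = count_mem y s -> sorted neq s = cycle neq s.
Proof.
case: s => [|a t] //= xy /andP[Hax Ht] Hc.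
rewrite rcons_path; case Hp: (path _ a t) => //=; symmetry.
case/orP: Hax => /eqP Ea; subst a.
  exact: cyc_ab xy Ht Hc Hp.
apply: (cyc_ab (b := x)); first by rewrite eq_sym.
- by apply: sub_all Ht => z; rewrite in2C.
- by move: Hc => /= ->.
- exact: Hp.
Qed.

Lemma sorted_rcons_lt x y s : x != y -> all (in2 x y) s ->
  count_mem x s < count_mem y s -> sorted neq s -> sorted neq (rcons s x).
Proof.
case: s => [|a t] xy; first by rewrite /= ltnn.
move=> /= /andP[Hax Ht] Hc Hp; rewrite rcons_path Hp /=.
case/orP: Hax => /eqP Ea; subst a.
  have [Hc' _] := alt2 xy Ht Hp.
  move: Hc Hc' => /= Hc Hc'; lia.
have yx : y != x by rewrite eq_sym.
have Ht' : all (in2 y x) t by apply: sub_all Ht => z; rewrite in2C.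
have [Hc' Hl] := alt2 yx Ht' Hp.
move: Hc Hc' Hl => /= Hc Hc'; case E: (odd (size t)) Hc' => /= Hc' Hl; last by rewrite Hl eq_sym.
rewrite eqxx (negbTE yx) in Hc Hc'; move: Hc Hc' => /= Hc Hc'.
exfalso; lia.
Qed.

End S.

Section S.
Variable V : finType.
Variable e : rel V.
Local Notation neq := (fun a b : V => a != b).

Definition unif (w : seq V) := forall x y : V, count_mem x w = count_mem y w.
Definition urep (w : seq V) := represents e w /\ unif w.

Lemma fl_all (x y : V) (w : seq V) : all (in2 x y) (filter (in2 x y) w).
Proof. exact: filter_all. Qed.

Lemma count_fl (x y z : V) (w : seq V) : (z == x) || (z == y) ->
  count_mem z (filter (in2 x y) w) = count_mem z w.
Proof.
move=> Hz; rewrite count_filter; apply: eq_count => a /=.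
by case: eqP => //= ->; rewrite /in2 Hz.
Qed.

Lemma alt_swap (a b : seq V) (x y : V) : x != y -> unif (a ++ b) ->
  alternate (b ++ a) x y = alternate (a ++ b) x y.
Proof.
move=> xy U; rewrite /alternate !filter_cat.
set s1 := filter _ a; set s2 := filter _ b.
have Hc : forall s, perm_eq s (s1 ++ s2) -> count_mem x s = count_mem y s.
  move=> s /permP Hp; rewrite !Hp /s1 /s2 -!filter_cat.
  rewrite (@count_fl x y x) ?eqxx // (@count_fl x y y) ?eqxx ?orbT //.
have Ha : forall s, perm_eq s (s1 ++ s2) -> all (in2 x y) s.
  move=> s /perm_mem Hm; apply/allP => z; rewrite Hm mem_cat => /orP[] H.
    by move/allP: (fl_all x y a) => /(_ z H).
  by move/allP: (fl_all x y b) => /(_ z H).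
rewrite (sorted_cycle xy (Ha _ (permEl (perm_catC s2 s1))) (Hc _ (permEl (perm_catC s2 s1)))).
rewrite (sorted_cycle xy (Ha _ (perm_refl _)) (Hc _ (perm_refl _))).
by rewrite -rot_size_cat rot_cycle.
Qed.

Lemma urep_swap (a b : seq V) : urep (a ++ b) -> urep (b ++ a).
Proof.
move=> [[Hm Ha] U]; split; [split|].
- by move=> v; rewrite mem_cat orbC -mem_cat.
- by move=> x y xy; rewrite alt_swap //; apply: Ha.
- by move=> x y; rewrite !count_cat addnC (addnC (count_mem y b)) -!count_cat (U x y).
Qed.

Fixpoint pw (z : seq V) n := if n is n'.+1 then z ++ pw z n' else [::].

Lemma pwD z m n : pw z (m + n) = pw z m ++ pw z n.
Proof. by elim: m => //= m IH; rewrite IH catA. Qed.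

Lemma filter_pw p z n : filter p (pw z n) = pw (filter p z) n.
Proof. by elim: n => //= n IH; rewrite filter_cat IH. Qed.

Lemma count_pw p z n : count p (pw z n) = n * count p z.
Proof. by elim: n => //= n IH; rewrite count_cat IH mulSn. Qed.

Lemma size_pw z n : size (pw z n) = n * size z.
Proof. by elim: n => //= n IH; rewrite size_cat IH mulSn. Qed.

Lemma mem_pw z n x : x \in pw z n.+1 = (x \in z).
Proof.
elim: n => /= [|n IH]; first by rewrite cats0.
by move: IH => /=; rewrite !mem_cat => ->; rewrite orbb.
Qed.

Lemma sorted_pw f n : cycle neq f -> sorted neq (pw f n).
Proof.
case: f => [|a t]; first by elim: n.
rewrite /= rcons_path => /andP[Hp Hl].
elim: n => //= n IH.
rewrite cat_path Hp /=; case: n IH => //= n.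
by rewrite cat_path => /andP[H1 H2]; rewrite Hl H1 H2.
Qed.

Lemma urep_pw z n : urep (pw z n.+1) -> urep z.
Proof.
move=> [[Hm Ha] U].
have Uz : unif z.
  by move=> x y; move: (U x y); rewrite !count_pw => /eqP; rewrite eqn_mul2l /= => /eqP.
split => //; split; first by move=> v; rewrite -(mem_pw _ n).
move=> x y xy; rewrite -Ha //.
rewrite /alternate filter_pw /=.
set f := filter _ z.
have Hf : all (in2 x y) f by exact: fl_all.
have Hc : count_mem x f = count_mem y f.
  by rewrite (@count_fl x y x) ?eqxx // (@count_fl x y y) ?eqxx ?orbT // Uz.
split.
- move=> Hs; have := sorted_pw n.+1 (_ : cycle neq f); apply; by rewrite -(sorted_cycle xy Hf Hc).
- by move/cat_sorted2 => [].
Qed.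

End S.

Section S.
Variable V : finType.

Lemma comm_pw_n n (u v : seq V) : size u + size v <= n -> u ++ v = v ++ u ->
  exists z a b, u = pw z a /\ v = pw z b.
Proof.
elim: n u v => [|n IH] u v.
  by case: u => //; case: v => // _ _; exists [::], 0, 0.
wlog: u v / size u <= size v.
  move=> W Hs Hc; case: (leqP (size u) (size v)) => H; first exact: W.
  have Hs2 : size v + size u <= n.+1 by rewrite addnC.
  have [z [a [b [E1 E2]]]] := W v u (ltnW H) Hs2 (esym Hc).
  by exists z, b, a.
move=> Huv Hs Hc.
case: u Huv Hs Hc => [|c u'] Huv Hs Hc.
  by exists v, 0, 1; rewrite /= cats0.
set u := c :: u' in Huv Hs Hc *.
have Ev : v = u ++ drop (size u) v.
  have := congr1 (take (size u)) Hc.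
  rewrite take_size_cat // takel_cat // => Et.
  by rewrite -{1}[v](cat_take_drop (size u)) -Et.
set v' := drop (size u) v in Ev.
have Hc' : u ++ v' = v' ++ u.
  have := congr1 (drop (size u)) Hc.
  rewrite drop_size_cat // {2}Ev -catA drop_size_cat //. by rewrite -Ev.
have Hs' : size u + size v' <= n.
  move: Hs; rewrite {1}Ev size_cat /u /=; lia.
have [z [a [b [E1 E2]]]] := IH u v' Hs' Hc'.
exists z, a, (a + b); split => //.
by rewrite Ev pwD -E1 -E2.
Qed.

Lemma comm_pw (u v : seq V) : u ++ v = v ++ u ->
  exists z a b, u = pw z a /\ v = pw z b.
Proof. exact: comm_pw_n. Qed.

Definition rk (x : V) : nat := enum_rank x.
Definition stepc (c : nat) (x : V) := c * #|V| + rk x.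
Definition code (s : seq V) := foldl stepc 0 s.

Lemma foldl_gen s c : foldl stepc c s = c * #|V| ^ (size s) + code s.
Proof.
rewrite /code; elim: s c => [|x s IH] c /=; first by rewrite muln1 addn0.
rewrite IH [foldl _ (stepc 0 x) _]IH /stepc expnS; rewrite mul0n add0n mulnDl mulnA addnA.
by [].
Qed.

Lemma code_cat a b : code (a ++ b) = code a * #|V| ^ (size b) + code b.
Proof. by rewrite {1}/code foldl_cat foldl_gen. Qed.

Lemma code_rcons a x : code (rcons a x) = code a * #|V| + rk x.
Proof. by rewrite -cats1 code_cat /= expn1. Qed.

Lemma code_inj a b : size a = size b -> code a = code b -> a = b.
Proof.
elim/last_ind: a b => [|a x IH] b.
  by case: b.
case/lastP: b => [|b y]; first by rewrite size_rcons.
rewrite !size_rcons !code_rcons => [[Hs]] Hc.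
have Hx : rk x < #|V| by rewrite /rk; case: (enum_rank x).
have Hy : rk y < #|V| by rewrite /rk; case: (enum_rank y).
have Hr : rk x = rk y.
  by have := congr1 (modn^~ #|V|) Hc; rewrite /= !modnMDl !modn_small //.
have H0 : 0 < #|V| by lia.
have Hq : code a = code b.
  by have := congr1 (divn^~ #|V|) Hc; rewrite /= !divnMDl // !divn_small // !addn0.
by rewrite (IH b Hs Hq) (enum_rank_inj (ord_inj Hr)).
Qed.

End S.

Section S.
Variable V : finType.
Variable e : rel V.
Local Notation neq := (fun a b : V => a != b).

Lemma sorted_uniq_neq (g : seq V) : uniq g -> sorted neq g.
Proof. by rewrite uniq_pairwise => /pairwise_sorted. Qed.

Lemma last_undup (f : seq V) x0 : f != [::] -> last x0 (undup f) = last x0 f.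
Proof. by case/lastP: f => // f c _; rewrite undup_rcons !last_rcons. Qed.

Lemma sorted_cat_undup (x y : V) (f : seq V) : x != y -> x \in f -> y \in f ->
  sorted neq f -> sorted neq (f ++ undup f).
Proof.
case: f => [//|c t] xy Hx Hy Hs.
have Hu := undup_uniq (c::t).
have Hl := last_undup c (isT : c :: t != [::]).
have Hx' : x \in undup (c :: t) by rewrite mem_undup.
have Hy' : y \in undup (c :: t) by rewrite mem_undup.
move: Hu Hl Hx' Hy'; case: (undup (c::t)) => [|d t'] //= /andP[Hd Hu] Hl Hx' Hy'.
rewrite cat_path; move: Hs => /= ->; rewrite /=.
case: t' Hd Hu Hl Hx' Hy' => [|f t''] Hd Hu Hl Hx' Hy'.
  by move: Hx' Hy' xy; rewrite !inE => /eqP -> /eqP ->; rewrite eqxx.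
rewrite -Hl /=; apply/andP; split.
  apply/negP => /eqP E; move: Hd; rewrite -E.
  by have := mem_last f t'' => ->.
have Hu2 : uniq (d :: f :: t'') by rewrite /= -/(uniq (f :: t'')) Hu andbT.
by have := sorted_uniq_neq Hu2.
Qed.


Definition step (M : nat) (w : seq V) :=
  w ++ filter (fun z => count_mem z w < M) (undup w).

Lemma step_alt1 M w (x y : V) : x != y -> x \in w ->
  count_mem x w < M -> M <= count_mem y w ->
  filter (predI (in2 x y) (fun z => count_mem z w < M)) (undup w) = [:: x]
  /\ (sorted neq (filter (in2 x y) w ++ [:: x]) = sorted neq (filter (in2 x y) w)).
Proof.
move=> xy Hx Sx Sy; split.
  rewrite -(filter_pred1_uniq (undup_uniq w)) ?mem_undup //.
  apply: eq_filter => z /=; rewrite /in2.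
  case: (eqVneq z x) => [->|zx]; first by rewrite Sx.
  case: (eqVneq z y) => [->|zy] //=; by rewrite ltnNge Sy.
apply/idP/idP; first by case/cat_sorted2.
rewrite cats1; apply: (@sorted_rcons_lt _ x y) => //; first exact: fl_all.
rewrite (@count_fl _ x y x) ?eqxx // (@count_fl _ x y y) ?eqxx ?orbT //.
exact: leq_trans Sx Sy.
Qed.

Lemma step_alt M w (x y : V) : x != y -> x \in w -> y \in w ->
  alternate (step M w) x y = alternate w x y.
Proof.
move=> xy Hx Hy.
rewrite /alternate /step filter_cat.
rewrite -(filter_predI (in2 x y)).
set S := (fun z : V => count_mem z w < M).
change (sorted neq (filter (in2 x y) w ++ filter (predI (in2 x y) S) (undup w))
  = sorted neq (filter (in2 x y) w)).
case: (ltnP (count_mem x w) M) => Sx; case: (ltnP (count_mem y w) M) => Sy.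
- rewrite (@eq_filter _ (predI (in2 x y) S) (in2 x y)); last first.
    move=> z /=; rewrite /in2 /S.
    case: (eqVneq z x) => [->|zx]; first by rewrite Sx.
    case: (eqVneq z y) => [->|zy] //=; by rewrite Sy.
  rewrite filter_undup.
  apply/idP/idP; first by case/cat_sorted2.
  by apply: sorted_cat_undup xy _ _; rewrite mem_filter /in2 eqxx ?orbT.
- by have [-> ->] := step_alt1 xy Hx Sx Sy.
- have yx : y != x by rewrite eq_sym.
  have [E1 E2] := step_alt1 yx Hy Sy Sx.
  rewrite (@eq_filter _ (predI (in2 x y) S) (predI (in2 y x) S)); last first.
    by move=> z /=; rewrite in2C.
  by rewrite E1 !(@eq_filter _ (in2 x y) (in2 y x)) ?E2 //; move=> z; rewrite in2C.
- rewrite (@eq_filter _ (predI (in2 x y) S) pred0) ?filter_pred0 ?cats0 //.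
  move=> z /=; rewrite /in2 /S.
  case: (eqVneq z x) => [->|zx]; first by rewrite ltnNge Sx.
  case: (eqVneq z y) => [->|zy] //=; by rewrite ltnNge Sy.
Qed.


Lemma count_step M w (x : V) : x \in w ->
  count_mem x (step M w) = count_mem x w + (count_mem x w < M).
Proof.
move=> Hx; rewrite /step count_cat count_filter; congr (_ + _).
case: (ltnP (count_mem x w) M) => Sx.
  rewrite (@eq_count _ _ (pred1 x)) ?count_uniq_mem ?undup_uniq ?mem_undup ?Hx //.
  by move=> z /=; case: eqP => // ->.
rewrite (@eq_count _ _ pred0) ?count_pred0 //.
by move=> z /=; case: eqP => //= ->; rewrite ltnNge Sx.
Qed.

Lemma unif_aux M j : forall w : seq V, represents e w ->
  (forall x, M - j <= count_mem x w <= M) -> exists w', urep e w'.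
Proof.
elim: j => [|j IH] w [Hm Ha] Hc.
  exists w; split; first by split.
  move=> x y; have := Hc x; have := Hc y; rewrite subn0; lia.
apply: (IH (step M w)).
  split; first by move=> v; rewrite mem_cat Hm.
  by move=> x y xy; rewrite step_alt //; apply: Ha.
move=> x; rewrite count_step //; have := Hc x.
case: (ltnP (count_mem x w) M) => /= H; lia.
Qed.

Lemma unif_exists w : represents e w -> exists w', urep e w'.
Proof.
move=> Hr; apply: (@unif_aux (size w) (size w) w Hr) => x.
by rewrite subnn count_size.
Qed.

End S.

Section S.
Variable V : finType.
Variable e : rel V.

Lemma code_lt (a b c : seq V) : c != [::] -> size a = size b ->
  code a < code b -> code (a ++ c) < code (b ++ c).
Proof.
case: c => [//|x c] _ Hs Hl.
have H0 : 0 < #|V| by case: (enum_rank x) => i Hi; exact: leq_ltn_trans (leq0n i) Hi.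
by rewrite !code_cat ltn_add2r ltn_pmul2r // expn_gt0 H0.
Qed.

Lemma main_aux n : forall c (w : seq V), urep e w -> size w < n -> code w < c ->
  exists w', represents e w' /\ border_free w'.
Proof.
elim: n => [//|n IHn] c; elim: c => [//|c IHc] w Hu Hs Hc.
case: (classic (bordered w)) => Hb; last by exists w; split => //; case: Hu.
case: Hb => u [v [Hu0 Ew]].
have E1 : w = u ++ (v ++ u) by [].
have E2 : w = (u ++ v) ++ u by rewrite Ew catA.
have U1 : urep e ((v ++ u) ++ u) by apply: urep_swap; rewrite -E1.
have U2 : urep e (u ++ (u ++ v)) by apply: urep_swap; rewrite -E2.
have Hsz : size (u ++ v) = size (v ++ u) by rewrite !size_cat addnC.
have Hu0' : u != [::] by apply/eqP.
case: (ltngtP (code (v ++ u)) (code (u ++ v))) => Hcmp.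
- apply: (IHc ((v ++ u) ++ u)) => //.
    by move: Hs; rewrite E2 !size_cat; lia.
  have := code_lt Hu0' (esym Hsz) Hcmp; rewrite -E2 => H; exact: leq_trans H Hc.
- apply: (IHc (u ++ (u ++ v))) => //.
    by move: Hs; rewrite E1 !size_cat; lia.
  have : code (u ++ (u ++ v)) < code w.
    by rewrite E1 (code_cat u (u ++ v)) (code_cat u (v ++ u)) Hsz ltn_add2l.
  lia.
have Ecomm : u ++ v = v ++ u by apply: code_inj.
have [z [a [b [Eu Ev]]]] := comm_pw Ecomm.
have Ha : 0 < a.
  case: a Eu => // Eu; by exfalso; apply: Hu0.
have Hz : 0 < size z.
  have := size_pw z a; rewrite -Eu; case: (size z) => [|//]; rewrite muln0.
  by move=> /size0nil Hu1; exfalso; exact: Hu0 Hu1.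
have Ew' : w = pw z (a.-1 + b + a).+1.
  by rewrite Ew Eu Ev -!pwD; congr pw; lia.
have Uz : urep e z by apply: (@urep_pw _ e z (a.-1 + b + a)); rewrite -Ew'.
apply: (IHn (code z).+1 z Uz) => //.
have : size w = (a.-1 + b + a).+1 * size z by rewrite Ew' size_pw.
move: Hz.
move: Hs; nia.
Qed.

End S.

Theorem mainTheorem1 (V : finType) (e : rel V) :
  simple_graph e -> word_representable e ->
  exists w : seq V, represents e w /\ border_free w.
Proof.
move=> _ [w0 Hw0]; have [w1 Hw1] := unif_exists Hw0.
exact: (@main_aux V e (size w1).+1 (code w1).+1 w1 Hw1 (ltnSn _) (ltnSn _)).
Qed.
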